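(* Let $V$ be a set of $n$ vertices partitioned into $k$ clusters of sizes $s_1\ge s_2\ge\dots\ge s_k$ (so $\sum_i s_i=n$). If $s_k<\frac{n}{4k}$, then there exists $h<k$ such that $$s_h\ge\frac{n}{2k}-h\cdot\frac{n}{4k^2}\quad\text{and}\quad s_{h+1}<\frac{n}{2k}-(h+1)\cdot\frac{n}{4k^2}.$$ Moreover, $\sum_{i\le h}s_i\ge n/2$. *)

(* Defs.v *)
From mathcomp Require Import all_boot all_order all_algebra.
Set Implicit Arguments. Unset Strict Implicit. Unset Printing Implicit Defensive.

(* Main.v *)
Require Import Defs.
From mathcomp Require Import all_boot all_order all_algebra.
From mathcomp Require Import zify ring lra.
Import Order.TTheory GRing.Theory Num.Theory.
Local Open Scope ring_scope.

Theorem lemma4p2 (R : realFieldType) (n k : nat) (s : nat -> nat)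
  (hk : (0 < k)%N)
  (hsorted : forall i : nat, (1 <= i)%N -> (i < k)%N -> (s i.+1 <= s i)%N)
  (hsum : (\sum_(1 <= i < k.+1) s i)%N = n)
  (hsmall : (s k)%:R < n%:R / (4 * k%:R) :> R) :
  exists h : nat, [/\ (1 <= h)%N, (h < k)%N,
    (s h)%:R >= n%:R / (2 * k%:R) - h%:R * (n%:R / (4 * k%:R ^+ 2)) :> R,
    (s h.+1)%:R < n%:R / (2 * k%:R) - h.+1%:R * (n%:R / (4 * k%:R ^+ 2)) :> R
  & n%:R / 2 <= (\sum_(1 <= i < h.+1) s i)%N%:R :> R].
Proof.
have k2 : (2 <= k)%N.
  case: (ltnP k 2) => // hl.
  have ek : k = 1%N by lia.
  move: hsum hsmall; rewrite ek big_nat1 => <-.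
  rewrite mulr1 => hsm.
  have : 0 <= (s 1)%:R :> R by rewrite ler0n.
  lra.
have mono : forall d i, (1 <= i)%N -> (i + d <= k)%N -> (s (i + d) <= s i)%N.
  elim=> [|d IH] i hi hid; first by rewrite addn0.
  apply: leq_trans (IH i hi _); last by lia.
  rewrite addnS; apply: hsorted; lia.
have monoij : forall i j, (1 <= i)%N -> (i <= j)%N -> (j <= k)%N -> (s j <= s i)%N.
  move=> i j hi hij hjk; have -> : j = (i + (j - i))%N by lia.
  apply: mono => //; lia.
have Kpos : 0 < k%:R :> R by rewrite ltr0n.
set K := k%:R : R. set N := n%:R : R.
set t := fun j : nat => N / (2 * K) - j%:R * (N / (4 * K ^+ 2)).
have Kne : K != 0 by rewrite gt_eqF.
have N0 : 0 <= N by rewrite ler0n.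
have y0 : 0 <= N / (4 * K ^+ 2) by apply: divr_ge0 => //; apply: mulr_ge0 => //; rewrite exprn_ge0 // ltW.
have x0 : 0 <= N / (2 * K) by apply: divr_ge0 => //; apply: mulr_ge0 => //; rewrite ltW.
have xK : N / (2 * K) * K = N / 2 by field.
have n1 : (n <= k * s 1)%N.
  rewrite -hsum.
  apply: leq_trans (_ : (\sum_(1 <= i < k.+1) s 1 <= _)%N); last by rewrite sum_nat_const_nat subn1.
  rewrite big_nat_cond [X in (_ <= X)%N]big_nat_cond.
  apply: leq_sum => i /andP [/andP [h1 h2] _]; apply: monoij => //; lia.
have s1 : t 1 <= (s 1)%:R.
  have h1 : N <= K * (s 1)%:R by rewrite /N /K -natrM ler_nat.
  have : N / (2 * K) * K <= (s 1)%:R * K by rewrite xK; lra.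
  rewrite ler_pM2r // /t => H. rewrite mul1r; lra.
have tk : t k = N / (4 * K) by rewrite /t; field.
pose P := fun j : nat => [&& (2 <= j)%N, (j <= k)%N & ((s j)%:R < t j)].
have exP : exists j, P j by exists k; rewrite /P k2 leqnn tk hsmall.
case: (ex_minnP exP) => j /and3P [j2 jk hj] jmin.
exists j.-1.
have hj1 : j.-1.+1 = j by lia.
have tH : t j.-1 <= (s j.-1)%:R.
  case: (ltnP j.-1 2) => hl.
    by have -> : j.-1 = 1%N by lia.
  rewrite leNgt; apply/negP => Hl.
  have := jmin j.-1; rewrite /P hl Hl /= => /(_ _).
  have -> : (j.-1 <= k)%N by lia.
  move=> /(_ isT); lia.
split; [lia|lia|exact: tH|by rewrite hj1|].
rewrite hj1.
have split : (n = \sum_(1 <= i < j) s i + \sum_(j <= i < k.+1) s i)%N.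
  by rewrite -hsum (@big_cat_nat _ _ _ j) //; lia.
have tail : (\sum_(j <= i < k.+1) s i <= (k.+1 - j) * s j)%N.
  rewrite -sum_nat_const_nat big_nat_cond [X in (_ <= X)%N]big_nat_cond.
  apply: leq_sum => i /andP [/andP [h1 h2] _]; apply: monoij => //; lia.
set A := (\sum_(1 <= i < j) s i)%N in split *.
set B := (\sum_(j <= i < k.+1) s i)%N in split tail *.
have NAB : N = A%:R + B%:R by rewrite /N split natrD.
have Bl : B%:R <= (k.+1 - j)%:R * (s j)%:R :> R by rewrite -natrM ler_nat.
set m := (k.+1 - j)%N in Bl.
have mK : m%:R <= K by rewrite /K ler_nat /m; lia.
have m0 : 0 <= m%:R :> R by rewrite ler0n.
have st : m%:R * (s j)%:R <= m%:R * t j by rewrite ler_wpM2l // ltW.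
have tj : t j <= N / (2 * K).
  rewrite /t; have : 0 <= j%:R * (N / (4 * K ^+ 2)) by apply: mulr_ge0; rewrite ?ler0n.
  lra.
have : m%:R * t j <= K * (N / (2 * K)).
  apply: le_trans (_ : m%:R * (N / (2 * K)) <= _); first by rewrite ler_wpM2l.
  by rewrite ler_wpM2r.
rewrite [K * _]mulrC xK => H.
lra.
Qed.
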